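(* Let $M \subseteq \mathrm{Inj}(\Omega)$ be a normal submonoid. Then $M \cap \mathrm{Sym}(\Omega)$ is a normal subgroup of $\mathrm{Sym}(\Omega)$ (in particular it is closed under inverses).
   Context: $\Omega$ is a countably infinite set; $\mathrm{Inj}(\Omega)$ is the monoid of all injective maps $\Omega\to\Omega$ under composition and $\mathrm{Sym}(\Omega)$ the group of all permutations of $\Omega$. A subset of $\mathrm{Inj}(\Omega)$ is normal if it is closed under $f\mapsto afa^{-1}$ for all $a\in\mathrm{Sym}(\Omega)$. *)

(* Defs.v *)
From mathcomp Require Import all_boot.
Set Implicit Arguments. Unset Strict Implicit. Unset Printing Implicit Defensive.

(* Omega is modelled as a type T equipped with a bijection from nat. *)
Definition countably_infinite (T : Type) : Prop :=
  exists e : nat -> T, bijective e.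

Definition submonoid_Inj (T : Type) (M : (T -> T) -> Prop) : Prop :=
  [/\ (forall f, M f -> injective f),
      M id &
      (forall f g, M f -> M g -> M (f \o g))].

(* Normality: closed under f |-> a f a^{-1} for every permutation a
   (a permutation is given together with its two-sided inverse b = a^{-1}). *)
Definition normal_set (T : Type) (M : (T -> T) -> Prop) : Prop :=
  forall a b : T -> T, cancel a b -> cancel b a ->
    forall f, M f -> M (a \o f \o b).

Definition normal_subgroup_Sym (T : Type) (H : (T -> T) -> Prop) : Prop :=
  [/\ (forall f, H f -> bijective f),
      H id,
      (forall f g, H f -> H g -> H (f \o g)),
      (forall f g, H f -> cancel f g -> cancel g f -> H g) &
      normal_set H].

(* Main.v *)
Require Import Defs.
From mathcomp Require Import all_boot.
From Stdlib Require Import ZArith Lia ClassicalEpsilon FunctionalExtensionality PropExtensionality.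
Set Implicit Arguments. Unset Strict Implicit.

Section Pw.
Variables (T : Type) (f g : T -> T).
Hypotheses (fK : cancel f g) (gK : cancel g f).

Definition pw (n : Z) (x : T) : T :=
  if (0 <=? n)%Z then ssrnat.iter (Z.to_nat n) f x else ssrnat.iter (Z.to_nat (- n)) g x.

Lemma pw0 x : pw 0 x = x. Proof. by []. Qed.

Lemma pw_succ n x : pw (Z.succ n) x = f (pw n x).
Proof.
rewrite /pw.
case: (Z.leb_spec 0 n) => Hn.
- have -> : (0 <=? Z.succ n)%Z = true by apply/Z.leb_le; lia.
  have -> : Z.to_nat (Z.succ n) = (Z.to_nat n).+1 by lia.
  by rewrite iterS.
- case: (Z.leb_spec 0 (Z.succ n)) => Hs.
  + have -> : Z.succ n = 0%Z by lia.
    have -> : Z.to_nat (- n) = 1 by lia.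
    by rewrite /= gK.
  + have -> : Z.to_nat (- n) = (Z.to_nat (- Z.succ n)).+1 by lia.
    by rewrite iterS gK.
Qed.

Lemma pw_pred n x : pw (Z.pred n) x = g (pw n x).
Proof.
have := pw_succ (Z.pred n) x. rewrite Z.succ_pred => ->. by rewrite fK.
Qed.

Lemma pw_add n m x : pw (n + m) x = pw n (pw m x).
Proof.
induction n as [|n IH|n IH] using Z.peano_ind.
- by [].
- by rewrite Z.add_succ_l !pw_succ IH.
- by rewrite Z.add_pred_l !pw_pred IH.
Qed.

Definition R x y := exists n, pw n x = y.

Lemma R_refl x : R x x. Proof. by exists 0%Z. Qed.
Lemma R_sym x y : R x y -> R y x.
Proof. move=> [n <-]; exists (- n)%Z; by rewrite -pw_add Z.add_opp_diag_l. Qed.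
Lemma R_trans x y z : R x y -> R y z -> R x z.
Proof. move=> [n <-] [m <-]; exists (m + n)%Z; by rewrite pw_add. Qed.

Lemma R_eq x y : R x y -> R x = R y.
Proof.
move=> H; apply: functional_extensionality => z; apply: propositional_extensionality.
split => H'; [exact: R_trans (R_sym H) H' | exact: R_trans H H'].
Qed.

Variable t0 : T.
Definition cb x := epsilon (inhabits t0) (R x).
Lemma cb_spec x : R x (cb x).
Proof. exact: (epsilon_spec (inhabits t0) (R x) (ex_intro _ x (R_refl x))). Qed.
Lemma cb_eq x y : R x y -> cb x = cb y.
Proof. by move=> H; rewrite /cb (R_eq H). Qed.

Definition ex_n x := epsilon (inhabits 0%Z) (fun n => pw n (cb x) = x).
Lemma ex_n_spec x : pw (ex_n x) (cb x) = x.
Proof.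
have [n Hn] := R_sym (cb_spec x).
exact: (epsilon_spec (inhabits 0%Z) (fun n => pw n (cb x) = x) (ex_intro _ n Hn)).
Qed.

Definition av x := pw (- ex_n x) (cb x).

Lemma av_char x n : pw n (cb x) = x -> av x = pw (- n) (cb x).
Proof.
move=> Hn; rewrite /av.
have E := ex_n_spec x.
transitivity (pw (- ex_n x - n) (pw n (cb x))); first by rewrite -pw_add; f_equal; lia.
rewrite Hn -[in X in pw _ X]E -pw_add; f_equal; lia.
Qed.

Lemma av_f x : av (f x) = g (av x).
Proof.
have Hc : cb (f x) = cb x by apply: cb_eq; apply: R_sym; exists 1%Z.
have E := ex_n_spec x.
have H1 : pw (Z.succ (ex_n x)) (cb (f x)) = f x by rewrite Hc pw_succ E.
rewrite (av_char H1) Hc /av.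
by rewrite -pw_pred; f_equal; lia.
Qed.

Lemma av_inv x : av (av x) = x.
Proof.
have Rxa : R x (av x).
  apply: R_trans (cb_spec x) _; by exists (- ex_n x)%Z.
have Hc : cb (av x) = cb x by apply: esym; apply: cb_eq.
have H1 : pw (- ex_n x) (cb (av x)) = av x by rewrite Hc.
rewrite (av_char H1) Hc Z.opp_involutive; exact: ex_n_spec.
Qed.

End Pw.

Lemma inv_in (T : Type) (t0 : T) (M : (T -> T) -> Prop) (hN : normal_set M)
  f g : M f -> cancel f g -> cancel g f -> M g.
Proof.
move=> Mf fK gK.
have H := hN (av f g t0) (av f g t0) (av_inv fK gK t0) (av_inv fK gK t0) f Mf.
have -> : g = (av f g t0 \o f \o av f g t0).
  apply: functional_extensionality => x /=.
  by rewrite (av_f fK gK) (av_inv fK gK).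
exact: H.
Qed.

Theorem mainTheorem2 (T : Type) (hT : countably_infinite T)
  (M : (T -> T) -> Prop) (hM : submonoid_Inj M) (hN : normal_set M) :
  normal_subgroup_Sym (fun f => M f /\ bijective f).
Proof.
have [e _] := hT.
case: hM => _ Mid Mcomp.
split.
- by move=> f [].
- split => //; exact: (Bijective (g := id)).
- move=> f h [Mf bf] [Mh bh]; split; [exact: Mcomp | exact: bij_comp].
- move=> f h [Mf bf] fK hK; split; first exact: inv_in (e 0) M hN f h Mf fK hK.
  exact: (Bijective hK fK).
- move=> a b aK bK f [Mf bf]; split; first exact: hN.
  apply: bij_comp; last exact: (Bijective bK aK).
  apply: bij_comp => //; exact: (Bijective aK bK).
Qed.
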